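(* Let $m\geq 1$, $n\geq 3$ and $p\geq 2$ be integers, and let $i,j\in V$. If $P$ is a walk in $D^m_n$ of length $pn-1$ from $i$ to $j$, then exactly one of the following holds: (a) $i=1$ and $j=(k-1)(n-1)+n$ for some $k\in\{1,\ldots,m\}$, and $P=P_{1j}\circ C^{r_{p-1}}\circ\cdots\circ C^{r_1}$ for some $r_1,\ldots,r_{p-1}\in\{1,\ldots,m\}$, where $P_{1j}$ is the unique walk of length $n-1$ from $1$ to $j$; (b) $j=1$ and $i=(k-1)(n-1)+2$ for some $k\in\{1,\ldots,m\}$, and $P=C^{r_{p-1}}\circ\cdots\circ C^{r_1}\circ P_{i1}$ for some $r_1,\ldots,r_{p-1}\in\{1,\ldots,m\}$, where $P_{i1}$ is the unique walk of length $n-1$ from $i$ to $1$; (c) there exist $k,r\in\{1,\ldots,m\}$ and $\ell\in\{3,\ldots,n\}$ with $i=(k-1)(n-1)+\ell$ and $j=(r-1)(n-1)+(\ell-1)$, and $P=Q_{1j}\circ C^{r_{p-1}}\circ\cdots\circ C^{r_1}\circ Q_{i1}$ for some $r_1,\ldots,r_{p-1}\in\{1,\ldots,m\}$, where $Q_{i1}$ is the shortest walk from $i$ to $1$, $Q_{1j}$ is the shortest walk from $1$ to $j$, and $Q_{1j}\circ Q_{i1}$ is the unique walk of length $n-1$ from $i$ to $j$.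
   Context: For integers $m\geq 1$, $n\geq 3$, the oriented Dutch windmill graph $D^m_n$ is the directed graph with vertex set $V=\{1,2,\ldots,m(n-1)+1\}$ whose directed edges $(a,b)$ are exactly: $(1,(k-1)(n-1)+2)$ for $k\in\{1,\ldots,m\}$; $((k-1)(n-1)+i,(k-1)(n-1)+i+1)$ for $k\in\{1,\ldots,m\}$ and $i\in\{2,\ldots,n-1\}$; and $((k-1)(n-1)+n,1)$ for $k\in\{1,\ldots,m\}$. A walk is a sequence of vertices $\langle v_1,\ldots,v_r\rangle$ in which each $(v_t,v_{t+1})$ is an edge; its length is $r-1$. For $k\in\{1,\ldots,m\}$, $C^k$ is the closed walk $\langle 1,(k-1)(n-1)+2,\ldots,(k-1)(n-1)+n,1\rangle$ of length $n$. If $P=\langle v_1,\ldots,v_r\rangle$ and $Q=\langle w_1,\ldots,w_s\rangle$ are walks with $w_1=v_r$, then $Q\circ P=\langle v_1,\ldots,v_r,w_2,\ldots,w_s\rangle$ (first traverse $P$, then $Q$). *)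

(* Defs.v *)
From mathcomp Require Import all_boot.
Set Implicit Arguments. Unset Strict Implicit. Unset Printing Implicit Defensive.

Definition inV (m n v : nat) : bool := (1 <= v) && (v <= m * (n - 1) + 1).

Definition dw_edge (m n : nat) : rel nat := fun a b =>
  has (fun k =>
    [|| (a == 1) && (b == (k - 1) * (n - 1) + 2),
        [&& (k - 1) * (n - 1) + 2 <= a, a <= (k - 1) * (n - 1) + (n - 1) & b == a.+1]
      | (a == (k - 1) * (n - 1) + n) && (b == 1)])
    (iota 1 m).

Definition is_walk (m n : nat) (W : seq nat) : Prop :=
  [/\ W != [::], all (inV m n) W & path (dw_edge m n) (head 0 W) (behead W)].

Definition walk_len (W : seq nat) : nat := (size W).-1.

Definition walk_from_to (m n : nat) (W : seq nat) (i j : nat) : Prop :=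
  [/\ is_walk m n W, head 0 W = i & last 0 W = j].

Definition cyc (n k : nat) : seq nat :=
  1 :: [seq (k - 1) * (n - 1) + t | t <- iota 2 (n - 1)] ++ [:: 1].

(* Q \o P = <v_1,...,v_r,w_2,...,w_s>  (first P, then Q) *)
Definition wcomp (Q P : seq nat) : seq nat := P ++ behead Q.

(* C^{r_{p-1}} \o ... \o C^{r_1} for rs = [:: r_1; ...; r_{p-1}] (C^{r_1} traversed first) *)
Definition cycs (n : nat) (rs : seq nat) : seq nat :=
  foldl (fun acc r => wcomp (cyc n r) acc) [:: 1] rs.

Definition in_range (m : nat) (rs : seq nat) : bool := all (fun r => (1 <= r) && (r <= m)) rs.

Definition unique_walk (m n : nat) (W : seq nat) (i j l : nat) : Prop :=
  [/\ walk_from_to m n W i j, walk_len W = l &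
      forall W', walk_from_to m n W' i j -> walk_len W' = l -> W' = W].

Definition shortest_walk (m n : nat) (W : seq nat) (i j : nat) : Prop :=
  walk_from_to m n W i j /\
  forall W', walk_from_to m n W' i j ->
    walk_len W <= walk_len W' /\ (walk_len W' = walk_len W -> W' = W).

Definition exactly_one3 (A B C : Prop) : Prop :=
  [\/ A /\ ~ B /\ ~ C, ~ A /\ B /\ ~ C | ~ A /\ ~ B /\ C].

(* Main.v *)
Require Import Defs.
From mathcomp Require Import all_boot zify.
Set Implicit Arguments. Unset Strict Implicit. Unset Printing Implicit Defensive.

Section S.
Variables m n : nat.
Hypothesis hm : 0 < m.
Hypothesis hn : 2 < n.
Local Notation e := (dw_edge m n).
Definition bv k t := (k-1)*(n-1)+t.
Definition blade k a c := [seq bv k t | t <- iota a c].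

Lemma bv_inj k k' t t' : 0<k -> 0<k' -> 2<=t<=n -> 2<=t'<=n -> bv k t = bv k' t' -> k = k' /\ t = t'.
Proof.
rewrite /bv => k0 k0' /andP[t2 tn] /andP[t2' tn'] E.
have [lt|gt|eq] := ltngtP k k'.
- have : k * (n-1) <= (k'-1)*(n-1) by apply: leq_mul => //; nia.
  have : (k-1)*(n-1) + (n-1) = k*(n-1) by case: (k) k0 => // k2 _; rewrite subSS subn0 mulSn addnC.
  nia.
- have : k' * (n-1) <= (k-1)*(n-1) by apply: leq_mul => //; nia.
  have : (k'-1)*(n-1) + (n-1) = k'*(n-1) by case: (k') k0' => // k2 _; rewrite subSS subn0 mulSn addnC.
  nia.
- subst; split => //; nia.
Qed.

Lemma bv_ge k t : t <= bv k t.
Proof. by rewrite /bv leq_addl. Qed.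

Lemma has_iota (p : pred nat) : has p (iota 1 m) -> exists2 k : nat, 0 < k <= m & p k.
Proof. by case/hasP => k; rewrite mem_iota add1n ltnS => ? ?; exists k. Qed.

Lemma edge1 w : e 1 w -> exists2 k, 0<k<=m & w = bv k 2.
Proof.
case/has_iota => k /andP[k1 km] /or3P[|/and3P[a _ _]|/andP[/eqP a _]].
- by case/andP => _ /eqP ->; exists k => //; apply/andP; split => //; nia.
- exfalso; nia.
- have h := bv_ge k n; move: h; rewrite /bv => h; exfalso; nia.
Qed.

Lemma edge_mid k t w: 0<k<=m -> 2<=t<n -> e (bv k t) w -> w = bv k t.+1.
Proof.
move=> /andP[k0 km] /andP[t2 tn].
case/has_iota => k' /andP[k1 km'] /or3P[|/and3P[a b /eqP c]|/andP[/eqP a _]].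
- case/andP => /eqP a _; have h := bv_ge k t; exfalso; nia.
- have E : bv k t = bv k' (bv k t - (k'-1)*(n-1)) by rewrite {2}/bv subnKC // (leq_trans (leq_addr 2 _) a).
  have h1 : 2 <= t <= n by apply/andP; split => //; exact: ltnW.
  have h2 : 2 <= bv k t - (k'-1)*(n-1) <= n.
    apply/andP; move: a b; rewrite /bv; move: ((k'-1)*(n-1)) ((k-1)*(n-1)) => X Y; lia.
  have [<- _] := bv_inj k0 k1 h1 h2 E.
  by rewrite c /bv addnS.
- have h1 : 2 <= t <= n by apply/andP; split => //; exact: ltnW.
  have h2 : 2 <= n <= n by apply/andP; split => //; exact: ltnW.
  have [_ ] := bv_inj k0 k1 h1 h2 a.
  move=> tn'; rewrite tn' ltnn in tn; done.
Qed.

Lemma edge_end k w: 0<k<=m -> e (bv k n) w -> w = 1.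
Proof.
move=> /andP[k0 km].
case/has_iota => k' /andP[k1 km'] /or3P[|/and3P[a b /eqP c]|/andP[_ /eqP ->]] //.
- case/andP => /eqP a _; have h := bv_ge k n; exfalso; nia.
- have E : bv k n = bv k' (bv k n - (k'-1)*(n-1)) by rewrite {2}/bv subnKC // (leq_trans (leq_addr 2 _) a).
  have h1 : 2 <= n <= n by apply/andP; split => //; exact: ltnW.
  have h2 : 2 <= bv k n - (k'-1)*(n-1) <= n.
    apply/andP; move: a b; rewrite /bv; move: ((k'-1)*(n-1)) ((k-1)*(n-1)) => X Y; lia.
  have [_ h] := bv_inj k0 k1 h1 h2 E.
  exfalso; move: b h; rewrite /bv; move: ((k'-1)*(n-1)) ((k-1)*(n-1)) => X Y; lia.
Qed.

Lemma decomp v : inV m n v -> v != 1 -> exists k t, [/\ 0<k<=m, 2<=t<=n & v = bv k t].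
Proof.
case/andP => v1 vm /eqP v1'.
exists ((v-2) %/ (n-1)).+1, ((v-2) %% (n-1) + 2).
have H0 := divn_eq (v-2) (n-1).
have H : (v-2) %% (n-1) < n-1 by rewrite ltn_pmod //; lia.
have hq : (v - 2) %/ (n - 1) < m by rewrite ltn_divLR; nia.
rewrite /bv.
have -> : ((v-2) %/ (n-1)).+1 - 1 = (v-2) %/ (n-1) by rewrite subn1.
move: ((v-2) %/ (n-1)) ((v-2) %% (n-1)) H0 H hq => q r H0 H hq.
split; try lia.
Qed.

Lemma blade_cons k a c : blade k a c.+1 = bv k a :: blade k a.+1 c.
Proof. by []. Qed.

Lemma size_blade k a c : size (blade k a c) = c.
Proof. by rewrite size_map size_iota. Qed.

Lemma take_blade k a c d : d <= c -> take d (blade k a c) = blade k a d.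
Proof.
elim: c a d => [|c IH] a [|d] //= hd.
by rewrite IH.
Qed.

Lemma last_blade k a d : last (bv k a) (blade k a.+1 d) = bv k (a + d).
Proof.
elim: d a => [|d IH] a; first by rewrite addn0.
by rewrite blade_cons /= IH addSnnS.
Qed.

Lemma last_blade2 k d : last 1 (blade k 2 d.+1) = bv k d.+2.
Proof. by rewrite blade_cons /= last_blade add2n. Qed.

Lemma path_take x s d : path e x s -> path e x (take d s).
Proof. by rewrite -{1}(cat_take_drop d s) cat_path => /andP[]. Qed.

Lemma path_drop x s d : path e x s -> path e (last x (take d s)) (drop d s).
Proof. by rewrite -{1}(cat_take_drop d s) cat_path => /andP[]. Qed.

Lemma last_one (x : nat) s : last x (s ++ [:: 1]) = 1.
Proof. by rewrite cats1 last_rcons. Qed.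

Lemma Bgen s : forall k t, 0<k<=m -> 2<=t<=n -> path e (bv k t) s ->
  forall d, d <= size s -> d <= n - t + 1 ->
  take d s = take d (blade k t.+1 (n-t) ++ [:: 1]).
Proof.
elim: s => [|y s IH] k t hk ht /=.
  by move=> _ [|d]; [rewrite take0|rewrite ltn0].
case/andP => ey ps [|d] ds dt; first by rewrite !take0.
rewrite /=.
have [tn|] := ltnP t n.
- have ey' := edge_mid hk (_ : 2 <= t < n) ey.
  have ht2 : 2 <= t < n by case/andP: ht => -> _.
  rewrite (ey' ht2).
  have -> : n - t = (n - t.+1).+1 by rewrite subnSK.
  rewrite blade_cons /=; congr (_ :: _).
  apply: IH => //.
  + apply/andP; split => //; lia.
  + by rewrite -(ey' ht2).
  + lia.
- move=> nt; have tn : t = n by case/andP: ht => _ h; apply/eqP; rewrite eqn_leq h.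
  subst t; rewrite (edge_end hk ey) subnn /=.
  have -> : d = 0 by lia.
  by rewrite !take0.
Qed.

Lemma Bfull s k t : 0<k<=m -> 2<=t<=n -> path e (bv k t) s -> n - t + 1 <= size s ->
  take (n-t+1) s = blade k t.+1 (n-t) ++ [:: 1].
Proof.
move=> hk ht ps hs.
rewrite (Bgen hk ht ps hs (leqnn _)) take_oversize //.
by rewrite size_cat size_blade /= addn1.
Qed.

Lemma Bshort s k t : 0<k<=m -> 2<=t<=n -> path e (bv k t) s -> size s <= n - t ->
  s = blade k t.+1 (size s).
Proof.
move=> hk ht ps hs.
have := Bgen hk ht ps (leqnn _) (_ : size s <= n - t + 1).
rewrite take_size takel_cat ?size_blade // take_blade // => ->; first by rewrite size_blade.
lia.
Qed.

Lemma Agen s d : path e 1 s -> 0 < d <= size s -> d <= n ->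
  exists2 r, 0<r<=m & take d s = take d (blade r 2 (n-1) ++ [:: 1]).
Proof.
case: s => [|y s] /=; first by move=> _ /andP[h1 h2]; exfalso; lia.
case/andP => ey ps.
have [r hr yE] := edge1 ey; subst y.
case: d => [|d] // /andP[_ ds] dn.
exists r => //.
have -> : n - 1 = (n - 2).+1 by lia.
rewrite blade_cons /=; congr (_ :: _).
apply: Bgen => //; try lia.
Qed.

Lemma Afull s : path e 1 s -> n <= size s ->
  exists2 r, 0<r<=m & take n s = blade r 2 (n-1) ++ [:: 1].
Proof.
move=> ps hs.
have h : 0 < n <= size s by rewrite hs andbT; lia.
have [r hr ->] := Agen ps h (leqnn n).
exists r => //; rewrite take_oversize // size_cat size_blade /= addn1; lia.
Qed.

Lemma Ashort s : path e 1 s -> 0 < size s <= n - 1 ->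
  exists2 r, 0<r<=m & s = blade r 2 (size s).
Proof.
move=> ps hs.
have h : 0 < size s <= size s by rewrite leqnn andbT; case/andP: hs.
have h2 : size s <= n by lia.
have [r hr] := Agen ps h h2.
rewrite take_size => ->; exists r => //.
rewrite takel_cat ?size_blade; last lia.
rewrite take_blade; last lia.
by rewrite size_blade.
Qed.

Definition ctail rs := flatten [seq blade r 2 (n-1) ++ [:: 1] | r <- rs].

Lemma cycsE rs : cycs n rs = 1 :: ctail rs.
Proof.
rewrite /cycs.
suff H : forall acc, foldl (fun acc r => wcomp (cyc n r) acc) acc rs = acc ++ ctail rs by rewrite H.
elim: rs => [|r rs IH] acc /=; first by rewrite cats0.
by rewrite IH /wcomp /= -catA.
Qed.

Lemma last_ctail rs : last 1 (ctail rs) = 1.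
Proof. by elim: rs => //= r rs IH; rewrite last_cat last_one IH. Qed.

Lemma C q : forall s, path e 1 s -> q * n <= size s ->
  exists rs, [/\ size rs = q, in_range m rs & take (q*n) s = ctail rs].
Proof.
elim: q => [|q IH] s ps hs.
  by exists [::]; rewrite mul0n take0.
rewrite mulSn in hs *.
have [r hr tk] := Afull ps (leq_trans (leq_addr _ _) hs).
have ps' := path_drop n ps; rewrite tk last_one in ps'.
have [|rs [h1 h2 h3]] := IH _ ps'; first by rewrite size_drop; lia.
exists (r :: rs); split => /=; first by rewrite h1.
  by rewrite hr h2.
by rewrite takeD tk h3.
Qed.

Lemma all_sub (s1 s2 : seq nat) : {subset s1 <= s2} -> all (inV m n) s2 -> all (inV m n) s1.
Proof. by move=> sub /allP H; apply/allP => x /sub /H. Qed.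

Lemma last_bladeS k d : 0 < d -> last 1 (blade k 2 d) = bv k d.+1.
Proof. by case: d => // d _; rewrite last_blade2. Qed.

Lemma bv_ge2 k t : 2 <= t -> 2 <= bv k t.
Proof. by move=> h; apply: leq_trans h (bv_ge k t). Qed.

Lemma bv_injm k k' t t' : 0<k<=m -> 0<k'<=m -> 2<=t<=n -> 2<=t'<=n -> bv k t = bv k' t' -> k = k' /\ t = t'.
Proof. by move=> /andP[a _] /andP[b _]; apply: bv_inj. Qed.

Lemma inV1 : inV m n 1.
Proof. by rewrite /inV leq_addl. Qed.

Lemma main_sec (p i j : nat) (P : seq nat) :
  2 <= p -> inV m n i -> inV m n j ->
  walk_from_to m n P i j -> walk_len P = p * n - 1 ->
  exactly_one3
    ((i = 1 /\ exists2 k, 1 <= k <= m & j = (k - 1) * (n - 1) + n) /\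
     exists W rs, [/\ unique_walk m n W 1 j (n - 1), size rs = p - 1, in_range m rs &
                     P = wcomp W (cycs n rs)])
    ((j = 1 /\ exists2 k, 1 <= k <= m & i = (k - 1) * (n - 1) + 2) /\
     exists W rs, [/\ unique_walk m n W i 1 (n - 1), size rs = p - 1, in_range m rs &
                     P = wcomp (cycs n rs) W])
    (exists k r l, [/\ 1 <= k <= m, 1 <= r <= m, 3 <= l <= n,
        i = (k - 1) * (n - 1) + l & j = (r - 1) * (n - 1) + (l - 1)] /\
        exists Q1 Q2 rs,
          [/\ shortest_walk m n Q1 i 1, shortest_walk m n Q2 1 j,
              unique_walk m n (wcomp Q2 Q1) i j (n - 1),
              size rs = p - 1 /\ in_range m rs &
              P = wcomp Q2 (wcomp (cycs n rs) Q1)]).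
Proof.
move=> hp iV jV [[Pne Pall Ppath] Phd Plst] Plen.
case: P Pne Pall Ppath Phd Plst Plen => [//|x s] _ Pall /= Ppath Phd Plst Plen.
subst x; rewrite /walk_len /= in Plen.
have pnE : p * n = (p-1)*n + n by rewrite -mulSnr subn1 prednK // ltnW.
have Xn : n <= (p-1)*n by rewrite leq_pmull // subn_gt0.
rewrite pnE in Plen.
case: (eqVneq i 1) => [Ei|i1].
- subst i.
  have hq : (p-1)*n <= size s by rewrite Plen; move: ((p-1)*n) Xn => X; lia.
  have [rs [szrs rg tk]] := C Ppath hq.
  have ps2 : path e 1 (drop ((p-1)*n) s).
    by have := path_drop ((p-1)*n) Ppath; rewrite tk last_ctail.
  have sz2 : size (drop ((p-1)*n) s) = n - 1 by rewrite size_drop Plen; move: ((p-1)*n) Xn => X; lia.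
  have h : 0 < size (drop ((p-1)*n) s) <= n - 1 by rewrite sz2 leqnn andbT; lia.
  have [r hr s2E] := Ashort ps2 h.
  rewrite sz2 in s2E.
  have jE : j = bv r n.
    rewrite -Plst -(cat_take_drop ((p-1)*n) s) last_cat tk last_ctail s2E.
    rewrite last_bladeS; last lia.
    congr bv; lia.
  apply: Or31; split; [|split].
  + split; first by split => //; exists r.
    exists (1 :: drop ((p-1)*n) s), rs; split => //.
    * split.
      -- split => //; last by rewrite /= -Plst -{2}(cat_take_drop ((p-1)*n) s) last_cat tk last_ctail.
         split => //=.
         apply/andP; split => //; apply: all_sub Pall => z hz; by rewrite inE (mem_drop hz) orbT.
      -- by rewrite /walk_len /= sz2.
      -- move=> W' [[W'ne W'all W'p] W'h W'l] W'len.
         case: W' W'ne W'all W'p W'h W'l W'len => [//|x s'] _ _ /= W'p W'h W'l W'len.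
         subst x; rewrite /walk_len /= in W'len.
         have h' : 0 < size s' <= n - 1 by rewrite W'len leqnn andbT; lia.
         have [r' hr' s'E] := Ashort W'p h'.
         rewrite W'len in s'E.
         have : bv r' n = bv r n.
           by rewrite -jE -W'l s'E last_bladeS; [congr bv|]; lia.
         have bn : 2 <= n <= n by rewrite leqnn andbT ltnW.
         move=> E; have [rr _] := bv_injm hr' hr bn bn E; subst r'.
         by rewrite s'E s2E.
    * by rewrite /wcomp cycsE /= -tk cat_take_drop.
  + case=> [[j1 _] _]; have := bv_ge2 r (_ : 2 <= n); lia.
  + case=> [k [r' [l [[_ _ hl ei _] _]]]].
    exfalso; move: ei hl; move: ((k-1)*(n-1)) => X; lia.
- have [k [l [hk hl iE]]] := decomp iV i1.
  subst i.
  have h1 : n - l + 1 <= size s by rewrite Plen; move: ((p-1)*n) Xn => X; lia.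
  have tk1 := Bfull hk hl Ppath h1.
  have ps1 : path e 1 (drop (n-l+1) s).
    by have := path_drop (n-l+1) Ppath; rewrite tk1 last_one.
  have hq : (p-1)*n <= size (drop (n-l+1) s) by rewrite size_drop Plen; move: ((p-1)*n) Xn => X; lia.
  have [rs [szrs rg tk]] := C ps1 hq.
  have ps2 : path e 1 (drop ((p-1)*n) (drop (n-l+1) s)).
    by have := path_drop ((p-1)*n) ps1; rewrite tk last_ctail.
  have sz2 : size (drop ((p-1)*n) (drop (n-l+1) s)) = l - 2 by rewrite !size_drop Plen; move: ((p-1)*n) Xn => X; lia.
  have sE : s = take (n-l+1) s ++ ctail rs ++ drop ((p-1)*n) (drop (n-l+1) s).
    by rewrite -tk cat_take_drop cat_take_drop.
  have jE : j = last 1 (drop ((p-1)*n) (drop (n-l+1) s)).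
    by rewrite -Plst {1}sE last_cat tk1 last_one last_cat last_ctail.
  have s2sub : {subset drop ((p-1)*n) (drop (n-l+1) s) <= s}.
    by move=> z /mem_drop /mem_drop.
  have Q1walk : walk_from_to m n (bv k l :: take (n-l+1) s) (bv k l) 1.
    split => //=; last by rewrite tk1 last_one.
    split => //=; last exact: path_take.
    apply/andP; split => //; apply: all_sub Pall => z hz; by rewrite inE (mem_take hz) orbT.
  clear Plen pnE Xn hq hp.
  have [l2|l3] := leqP l 2.
  + have El : l = 2 by case/andP: hl => a _; apply/eqP; rewrite eqn_leq a l2.
    subst l.
    have s2nil : drop ((p-1)*n) (drop (n-2+1) s) = [::] by apply/eqP; rewrite -size_eq0 sz2.
    rewrite s2nil /= in jE.
    apply: Or32; split; [|split].
    * case=> [[ei _] _]; by move/eqP: i1.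
    * split; first by split => //; exists k.
      exists (bv k 2 :: take (n-2+1) s), rs; split => //.
      -- split; first exact: Q1walk.
         ++ by rewrite /walk_len /= size_takel //; lia.
         ++ move=> W' [[W'ne W'all W'p] W'h W'l] W'len.
            case: W' W'ne W'all W'p W'h W'l W'len => [//|x s'] _ _ /= W'p W'h W'l W'len.
            subst x; rewrite /walk_len /= in W'len.
            have h' : n - 2 + 1 <= size s' by rewrite W'len; lia.
            have := Bfull hk hl W'p h'.
            rewrite take_oversize; last by rewrite W'len; lia.
            by move=> ->; rewrite tk1.
      -- by rewrite /wcomp cycsE /= {1}sE s2nil cats0.
    * case=> [k' [r' [l' [[_ _ hl' _ ej] _]]]].
      exfalso; move: ej hl'; rewrite jE; move: ((r'-1)*(n-1)) => X; lia.
  + have h : 0 < size (drop ((p-1)*n) (drop (n-l+1) s)) <= n - 1 by rewrite sz2; lia.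
    have [r hr s2E] := Ashort ps2 h.
    rewrite sz2 in s2E.
    have jE' : j = bv r (l-1).
      by rewrite jE s2E last_bladeS; [congr bv|]; clear -l3 hl; lia.
    have hl3 : 3 <= l <= n by case/andP: hl => _ ->; rewrite l3.
    apply: Or33; split; [|split].
    * case=> [[ei _] _]; by move/eqP: i1.
    * case=> [[ej _] _]; have := bv_ge2 r (_ : 2 <= l - 1); clear -ej jE' hl3; lia.
    * exists k, r, l; split; first by split.
      exists (bv k l :: take (n-l+1) s), (1 :: drop ((p-1)*n) (drop (n-l+1) s)), rs.
      split => //.
      -- split => //.
         move=> W' [[W'ne W'all W'p] W'h W'l].
         case: W' W'ne W'all W'p W'h W'l => [//|x s'] _ _ /= W'p W'h W'l.
         subst x; rewrite /walk_len /= size_takel //.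
         case: (leqP (n-l+1) (size s')) => hs'.
         ++ have tk' := Bfull hk hl W'p hs'.
            split => // eqs.
            by rewrite -(take_oversize (_ : size s' <= n-l+1)) ?eqs // tk' tk1.
         ++ have hs2 : size s' <= n - l by clear -hs'; lia.
            have := Bshort hk hl W'p hs2.
            move=> s'E; exfalso; move: W'l; rewrite s'E last_blade.
            have := bv_ge2 k (_ : 2 <= l + size s'); clear -hl; lia.
      -- split.
         ++ split; [|done|by rewrite /= jE].
            split => //=.
            apply/andP; split; first exact: inV1.
            apply: all_sub Pall => z hz; by rewrite inE (s2sub _ hz) orbT.
         ++ move=> W' [[W'ne W'all W'p] W'h W'l].
            case: W' W'ne W'all W'p W'h W'l => [//|x s'] _ _ /= W'p W'h W'l.
            subst x; rewrite /walk_len /= sz2.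
            case: (leqP n (size s')) => hs'.
              by split; [clear -hs' hl3; lia | move=> eqs; exfalso; clear -hs' eqs hl3; lia].
            case: (posnP (size s')) => hs0.
              move/eqP: hs0; rewrite size_eq0 => /eqP s'0; subst s'.
              exfalso; move: W'l; rewrite /= jE' => ej.
              have := bv_ge2 r (_ : 2 <= l - 1); clear -ej hl3; lia.
            have h'' : 0 < size s' <= n - 1 by rewrite hs0; lia.
            have [r' hr' s'E] := Ashort W'p h''.
            have : bv r' (size s').+1 = bv r (l-1).
              by rewrite -last_bladeS // -s'E W'l jE'.
            have b1 : 2 <= (size s').+1 <= n by clear -h'' hn; lia.
            have b2 : 2 <= l - 1 <= n by clear -hl3 hn; lia.
            move=> E; have [rr ss] := bv_injm hr' hr b1 b2 E; subst r'.
            have ss' : size s' = l - 2 by clear -ss hl3; lia.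
            split; first by rewrite ss'.
            by move=> _; rewrite s'E ss' s2E.
      -- split.
         ++ split => //=.
            ** split => //=.
               --- apply/andP; split => //; apply: all_sub Pall => z.
                   rewrite mem_cat => /orP[/mem_take hz|/s2sub hz]; by rewrite inE hz orbT.
               --- rewrite cat_path path_take //= tk1 last_one; exact: ps2.
            ** by rewrite last_cat tk1 last_one -jE.
         ++ by rewrite /walk_len /= size_cat size_takel // sz2; lia.
         ++ move=> W' [[W'ne W'all W'p] W'h W'l] W'len.
            case: W' W'ne W'all W'p W'h W'l W'len => [//|x s'] _ _ /= W'p W'h W'l W'len.
            subst x; rewrite /walk_len /= in W'len.
            have h' : n - l + 1 <= size s' by rewrite W'len; clear -hl3 hn; lia.
            have tk' := Bfull hk hl W'p h'.
            have pd := path_drop (n-l+1) W'p; rewrite tk' last_one in pd.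
            have hd : 0 < size (drop (n-l+1) s') <= n - 1 by rewrite size_drop W'len; clear -hl3 hn; lia.
            have [r' hr' dE] := Ashort pd hd.
            rewrite size_drop W'len in dE.
            have : bv r' (l-1) = bv r (l-1).
              rewrite -jE' -W'l -(cat_take_drop (n-l+1) s') last_cat tk' last_one dE.
              by rewrite last_bladeS; [congr bv|]; clear -hl3; lia.
            have b2 : 2 <= l - 1 <= n by clear -hl3 hn; lia.
            move=> E; have [rr _] := bv_injm hr' hr b2 b2 E; subst r'.
            rewrite -(cat_take_drop (n-l+1) s') tk' dE s2E tk1.
            by have -> : n - 1 - (n - l + 1) = l - 2 by clear -hl3; lia.
      -- by rewrite /wcomp cycsE /= {1}sE -catA.
Qed.
End S.

Theorem lemma2p5 (m n p i j : nat) (P : seq nat) :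
  1 <= m -> 3 <= n -> 2 <= p -> inV m n i -> inV m n j ->
  walk_from_to m n P i j -> walk_len P = p * n - 1 ->
  exactly_one3
    ((i = 1 /\ exists2 k, 1 <= k <= m & j = (k - 1) * (n - 1) + n) /\
     exists W rs, [/\ unique_walk m n W 1 j (n - 1), size rs = p - 1, in_range m rs &
                     P = wcomp W (cycs n rs)])
    ((j = 1 /\ exists2 k, 1 <= k <= m & i = (k - 1) * (n - 1) + 2) /\
     exists W rs, [/\ unique_walk m n W i 1 (n - 1), size rs = p - 1, in_range m rs &
                     P = wcomp (cycs n rs) W])
    (exists k r l, [/\ 1 <= k <= m, 1 <= r <= m, 3 <= l <= n,
        i = (k - 1) * (n - 1) + l & j = (r - 1) * (n - 1) + (l - 1)] /\
        exists Q1 Q2 rs,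
          [/\ shortest_walk m n Q1 i 1, shortest_walk m n Q2 1 j,
              unique_walk m n (wcomp Q2 Q1) i j (n - 1),
              size rs = p - 1 /\ in_range m rs &
              P = wcomp Q2 (wcomp (cycs n rs) Q1)]).
Proof.
move=> hm hn; exact: main_sec.
Qed.
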